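(* Let $G=(V,E)$ be connected with $n\ge 3$ vertices. For every $u\in V_{\ge2}$, $$(n-1)(n-2)\,\mathrm{bc}(u)=\sum_{s\in V_{\ge2}\setminus\{u\}}\big(1+\mathrm{deg}_1(s)\big)\big(\tilde\delta_s(u)+\zeta_s(u)\big)+\mathrm{deg}_1(u)\big(2n-3-\mathrm{deg}_1(u)\big).$$
   Context: Graphs are finite, simple, undirected, unweighted. $\sigma_{st}$ = number of shortest $s$–$t$ paths, $\sigma_{st}(v)$ = number of those through $v\notin\{s,t\}$; $\mathrm{bc}(v)=\frac{1}{(n-1)(n-2)}\sum_{s\ne t,\ s,t\ne v}\sigma_{st}(v)/\sigma_{st}$ in $G$ (ordered pairs). $V_1$ = degree-1 vertices of $G$, $V_{\ge2}=V\setminus V_1$, $\tilde G$ = subgraph induced by $V_{\ge2}$ with counts $\tilde\sigma$. $\mathrm{deg}_1(t)$ = number of neighbors of $t$ in $G$ of degree 1. For $s,u\in V_{\ge2}$: $\tilde\delta_s(u)=\sum_{t\in V_{\ge2},t\ne s,u}\tilde\sigma_{st}(u)/\tilde\sigma_{st}$, $\zeta_s(u)=\sum_{t\in V_{\ge2},t\ne s,u}\mathrm{deg}_1(t)\tilde\sigma_{st}(u)/\tilde\sigma_{st}$. *)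

(* Defs.v *)
From HB Require Import structures.
From mathcomp Require Import all_boot all_order all_algebra.
Set Implicit Arguments. Unset Strict Implicit. Unset Printing Implicit Defensive.
Import Order.TTheory GRing.Theory Num.Theory.

(* A finite simple undirected graph: vertex type T : finType with an
   adjacency relation e : rel T that is symmetric and irreflexive. *)

Section Graph.
Variable T : finType.
Variable e : rel T.

(* walks of length k from s to t, encoded as k.-tuples (the vertices after s) *)
Definition is_walk (k : nat) (s t : T) (p : k.-tuple T) : bool :=
  path e s p && (last s p == t).

(* graph distance: least k with a walk of length k from s to t
   (equals #|T| if t is unreachable; irrelevant for connected graphs) *)
Definition gdist (s t : T) : nat :=
  find (fun k => [exists p : k.-tuple T, is_walk s t p]) (iota 0 #|T|).

Definition shortest_paths (s t : T) : {set (gdist s t).-tuple T} :=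
  [set p | is_walk s t p].

Definition sigma (s t : T) : nat := #|shortest_paths s t|.

Definition sigma_via (s t v : T) : nat :=
  #|[set p in shortest_paths s t | v \in s :: (p : seq T)]|.

Definition deg (v : T) : nat := #|[set w | e v w]|.

Definition connected_graph : Prop := forall x y : T, connect e x y.

End Graph.

Local Open Scope ring_scope.

Definition bc (T : finType) (e : rel T) (v : T) : rat :=
  (((#|T| - 1)%:R * (#|T| - 2)%:R)^-1) *
  \sum_(s : T | s != v) \sum_(t : T | (t != s) && (t != v))
      ((sigma_via e s t v)%:R / (sigma e s t)%:R).

Definition V1 (T : finType) (e : rel T) : {set T} := [set v | deg e v == 1%N].
Definition Vge2 (T : finType) (e : rel T) : {set T} := ~: V1 e.

Definition induced (T : finType) (e : rel T) (A : {set T}) : rel T :=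
  fun x y => [&& e x y, x \in A & y \in A].

Definition deg1 (T : finType) (e : rel T) (t : T) : nat :=
  #|[set w | e t w & deg e w == 1%N]|.

Definition tsigma (T : finType) (e : rel T) (s t : T) : nat :=
  sigma (induced e (Vge2 e)) s t.
Definition tsigma_via (T : finType) (e : rel T) (s t u : T) : nat :=
  sigma_via (induced e (Vge2 e)) s t u.

Definition tdelta (T : finType) (e : rel T) (s u : T) : rat :=
  \sum_(t in Vge2 e | (t != s) && (t != u))
     ((tsigma_via e s t u)%:R / (tsigma e s t)%:R).

Definition zeta (T : finType) (e : rel T) (s u : T) : rat :=
  \sum_(t in Vge2 e | (t != s) && (t != u))
     ((deg1 e t)%:R * (tsigma_via e s t u)%:R / (tsigma e s t)%:R).

(* Main.v *)
Require Import Defs.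
From mathcomp Require Import all_boot all_order all_algebra.
From mathcomp Require Import zify ring.
Import Order.TTheory GRing.Theory Num.Theory.
Set Implicit Arguments. Unset Strict Implicit. Unset Printing Implicit Defensive.
Section Walks.
Variable T : finType.
Variable e : rel T.

Definition wk (s t : T) (q : seq T) := path e s q && (last s q == t).

Lemma gdist_min s t q : wk s t q -> (gdist e s t <= size q)%N.
Proof.
move=> w; rewrite /gdist.
case: (ltnP (size q) #|T|) => hq; last first.
  by apply: leq_trans (find_size _ _) _; rewrite size_iota.
rewrite leqNgt; apply/negP => hlt; have := before_find 0%N hlt.
rewrite nth_iota // add0n; move/negbT/negP; apply.
by apply/existsP; exists (in_tuple q).
Qed.

Lemma wk_connect s t q : wk s t q -> connect e s t.
Proof. by case/andP=> p /eqP <-; apply/connectP; exists q. Qed.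

Lemma gdist_walk s t : connect e s t ->
  exists2 q, wk s t q & size q = gdist e s t.
Proof.
case/connectP=> p pp ->; case: (shortenP pp) => q pq uq _.
have hq : (size q < #|T|)%N.
  have := card_uniqP uq; rewrite /= => <-; exact: max_card.
set P := (fun k => [exists p : k.-tuple T, is_walk e s (last s q) p]).
have hP : has P (iota 0 #|T|).
  apply/hasP; exists (size q); first by rewrite mem_iota.
  by apply/existsP; exists (in_tuple q); rewrite /is_walk pq eqxx.
have := nth_find 0%N hP; rewrite -/(gdist e s (last s q)).
have := hP; rewrite has_find size_iota => hl.
rewrite nth_iota // add0n => /existsP [r rw].
by exists r => //; rewrite size_tuple.
Qed.

Lemma sigma_k s t k : gdist e s t = k ->
  sigma e s t = #|[set p : k.-tuple T | is_walk e s t p]|.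
Proof. by move=> <-. Qed.

Lemma sigma_via_k s t v k : gdist e s t = k ->
  sigma_via e s t v = #|[set p : k.-tuple T | is_walk e s t p && (v \in s :: (p : seq T))]|.
Proof.
move=> <-; rewrite /sigma_via; apply: eq_card => p; by rewrite !inE.
Qed.

Lemma gdist_eq s t q : wk s t q ->
  (forall r, wk s t r -> size q <= size r)%N -> gdist e s t = size q.
Proof.
move=> w hm; apply/eqP; rewrite eqn_leq gdist_min //=.
have [r wr <-] := gdist_walk (wk_connect w); exact: hm.
Qed.

Lemma sigma_gt0 s t : connect e s t -> (0 < sigma e s t)%N.
Proof.
move=> c; have [q wq sq] := gdist_walk c.
apply/card_gt0P.
have sq' : size q == gdist e s t by rewrite sq.
by exists (Tuple sq'); rewrite inE.
Qed.

Lemma tuple_rcons k (p : k.+1.-tuple T) : exists q : k.-tuple T, exists x, val p = rcons q x.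
Proof.
case: p => s; case/lastP: s => [|q x] sz; first by [].
have sq : size q == k by rewrite size_rcons eqSS in sz.
by exists (Tuple sq), x.
Qed.

Lemma tuple_cons k (p : k.+1.-tuple T) : exists x, exists q : k.-tuple T, val p = x :: q.
Proof.
case: p => s; case: s => [|x q] sz; first by [].
have sq : size q == k by rewrite eqSS in sz.
by exists x, (Tuple sq).
Qed.

Lemma card_tail s t t' k (Q : seq T -> bool) : (forall w, e w t = (w == t')) ->
  #|[set p : k.+1.-tuple T | is_walk e s t p && Q p]| =
  #|[set p : k.-tuple T | is_walk e s t' p && Q (rcons p t)]|.
Proof.
move=> ht.
rewrite -(card_imset _ (f := fun p : k.-tuple T => [tuple of rcons p t])); last first.
  move=> p q h; apply: val_inj; apply: (@rcons_injl _ t); exact: (congr1 val h).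
apply: eq_card => p; rewrite [in RHS]unfold_in; apply/idP/imsetP.
  rewrite inE; have [q [x ep]] := tuple_rcons p.
  rewrite /is_walk ep rcons_path last_rcons => /andP[/andP[/andP[pq lq] /eqP xt] hQ].
  subst x; rewrite ht in lq; exists q; last by apply: val_inj.
  by rewrite inE /is_walk pq lq hQ.
case=> q; rewrite !inE /is_walk => /andP[/andP[pq lq] hQ] ->.
by rewrite /= rcons_path last_rcons ht pq lq eqxx hQ.
Qed.

Lemma card_head s s' t k (Q : seq T -> bool) : (forall w, e s w = (w == s')) ->
  #|[set p : k.+1.-tuple T | is_walk e s t p && Q p]| =
  #|[set p : k.-tuple T | is_walk e s' t p && Q (s' :: (p : seq T))]|.
Proof.
move=> hs.
rewrite -(card_imset _ (f := fun p : k.-tuple T => [tuple of s' :: p])); last first.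
  move=> p q h; apply: val_inj; have := congr1 val h; by case.
apply: eq_card => p; rewrite [in RHS]unfold_in; apply/idP/imsetP.
  rewrite inE; have [x [q ep]] := tuple_cons p.
  rewrite /is_walk ep /= hs => /andP[/andP[/andP[/eqP xs pq] lq] hQ].
  subst x; exists q; last by apply: val_inj.
  by rewrite inE /is_walk pq lq hQ.
case=> q; rewrite !inE /is_walk => /andP[/andP[pq lq] hQ] ->.
by rewrite /= hs eqxx pq lq hQ.
Qed.

End Walks.

Section Leaf.
Variable T : finType.
Variable e : rel T.

Lemma sigma_k1 s t k : gdist e s t = k ->
  sigma e s t = #|[set p : k.-tuple T | is_walk e s t p && true]|.
Proof. by move=> <-; apply: eq_card => p; rewrite !inE andbT. Qed.

Lemma gdist_tail s t t' : connect e s t' -> (forall w, e w t = (w == t')) ->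
  s != t -> gdist e s t = (gdist e s t').+1.
Proof.
move=> c ht st.
have [q wq sq] := gdist_walk c.
have w1 : wk e s t (rcons q t).
  by rewrite /wk rcons_path last_rcons ht eqxx andbT.
have [r wr sr] := gdist_walk (wk_connect w1).
have g1 := gdist_min w1; rewrite size_rcons in g1.
case/lastP: r wr sr => [|r' x] wr sr.
  by move: wr; rewrite /wk => /andP[_ /= /eqP sts]; rewrite sts eqxx in st.
rewrite /wk rcons_path last_rcons in wr.
case/andP: wr => /andP[pr lr] /eqP xt; subst x; rewrite ht in lr.
have g2 : wk e s t' r' by rewrite /wk pr lr.
have := gdist_min g2; rewrite size_rcons in sr; lia.
Qed.

Lemma gdist_head s s' t : connect e s' t -> (forall w, e s w = (w == s')) ->
  s != t -> gdist e s t = (gdist e s' t).+1.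
Proof.
move=> c hs st.
have [q wq sq] := gdist_walk c.
have w1 : wk e s t (s' :: q).
  by rewrite /wk /= hs eqxx.
have [r wr sr] := gdist_walk (wk_connect w1).
have g1 := gdist_min w1; rewrite /= in g1.
case: r wr sr => [|x r'] wr sr.
  by move: wr; rewrite /wk => /andP[_ /= /eqP sts]; rewrite sts eqxx in st.
rewrite /wk /= hs in wr.
case/andP: wr => /andP[/eqP xs pr] lr; subst x.
have g2 : wk e s' t r' by rewrite /wk pr lr.
have := gdist_min g2; rewrite /= in sr; lia.
Qed.

Lemma sigma_tail s t t' : connect e s t' -> (forall w, e w t = (w == t')) ->
  s != t -> sigma e s t = sigma e s t'.
Proof.
move=> c ht st.
rewrite (sigma_k1 (gdist_tail c ht st)) (sigma_k1 (erefl (gdist e s t'))).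
by rewrite (card_tail _ _ (fun _ => true) ht).
Qed.

Lemma sigma_via_tail s t t' v : connect e s t' -> (forall w, e w t = (w == t')) ->
  s != t -> v != t -> sigma_via e s t v = sigma_via e s t' v.
Proof.
move=> c ht st vt.
rewrite (sigma_via_k v (gdist_tail c ht st)) (sigma_via_k v (erefl (gdist e s t'))).
rewrite (card_tail _ _ (fun p => v \in s :: p) ht).
apply: eq_card => p; rewrite !inE mem_rcons inE (negbTE vt) //.
Qed.

Lemma sigma_head s s' t : connect e s' t -> (forall w, e s w = (w == s')) ->
  s != t -> sigma e s t = sigma e s' t.
Proof.
move=> c hs st.
rewrite (sigma_k1 (gdist_head c hs st)) (sigma_k1 (erefl (gdist e s' t))).
by rewrite (card_head _ _ (fun _ => true) hs).
Qed.

Lemma sigma_via_head s s' t v : connect e s' t -> (forall w, e s w = (w == s')) ->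
  s != t -> v != s -> sigma_via e s t v = sigma_via e s' t v.
Proof.
move=> c hs st vs.
rewrite (sigma_via_k v (gdist_head c hs st)) (sigma_via_k v (erefl (gdist e s' t))).
rewrite (card_head _ _ (fun p => v \in s :: p) hs).
apply: eq_card => p; rewrite !inE (negbTE vs) //.
Qed.

End Leaf.

Section Induced.
Variable T : finType.
Variable e : rel T.
Hypothesis e_sym : symmetric e.
Variable A : {set T}.
Hypothesis hleaf : forall x, x \notin A -> exists x', forall w, e x w = (w == x').

Lemma induced_path x p : x \in A ->
  path (induced e A) x p = path e x p && all (mem A) p.
Proof.
elim: p x => [|y p IH] x xA //=.
rewrite /induced xA /=; case: (e x y) => //=; case yA: (y \in A) => /=.
  by rewrite IH.
by rewrite andbF.
Qed.

Lemma shortest_in_A s t p : s \in A -> t \in A -> wk e s t p ->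
  size p = gdist e s t -> all (mem A) p.
Proof.
move=> sA tA w sz; apply/allP => x xp; apply/negPn/negP => xA.
have [x' hx] := hleaf xA.
move: w sz; case/splitPr: xp => p1 p2.
case: p2 => [|z p3].
  rewrite /wk last_cat /= => /andP[_ /eqP xt] _; case/negP: xA; rewrite xt; exact: tA.
rewrite /wk cat_path last_cat /= hx => /andP[/and4P[p1p ex /eqP zx pz] lt].
subst z; rewrite e_sym hx in ex; move/eqP: ex => ex.
have w2 : wk e s t (p1 ++ p3) by rewrite /wk cat_path last_cat ex p1p pz.
have := gdist_min w2; rewrite !size_cat /=; lia.
Qed.

Lemma walk_ind_e s t p : s \in A -> wk (induced e A) s t p -> wk e s t p.
Proof. by move=> sA; rewrite /wk induced_path // => /andP[/andP[-> _] ->]. Qed.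

Lemma gdist_ind s t : s \in A -> t \in A -> connect e s t ->
  gdist (induced e A) s t = gdist e s t.
Proof.
move=> sA tA c; have [q wq sq] := gdist_walk c.
have aq := shortest_in_A sA tA wq sq.
have wq' : wk (induced e A) s t q.
  by move: wq; rewrite /wk induced_path // aq andbT.
rewrite -sq; apply: gdist_eq wq' _ => r /(walk_ind_e sA) wr.
rewrite sq; exact: gdist_min wr.
Qed.

Lemma iswalk_ind s t (p : (gdist e s t).-tuple T) : s \in A -> t \in A ->
  is_walk (induced e A) s t p = is_walk e s t p.
Proof.
move=> sA tA; apply/idP/idP; first exact: walk_ind_e.
move=> w; have := shortest_in_A sA tA w (size_tuple p).
by move: w; rewrite /is_walk induced_path // => /andP[-> ->] ->.
Qed.

Lemma sigma_ind s t : s \in A -> t \in A -> connect e s t ->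
  sigma (induced e A) s t = sigma e s t.
Proof.
move=> sA tA c; rewrite (sigma_k (gdist_ind sA tA c)) /sigma /shortest_paths.
by apply: eq_card => p; rewrite !inE iswalk_ind.
Qed.

Lemma sigma_via_ind s t v : s \in A -> t \in A -> connect e s t ->
  sigma_via (induced e A) s t v = sigma_via e s t v.
Proof.
move=> sA tA c; rewrite (sigma_via_k v (gdist_ind sA tA c)) (sigma_via_k v (erefl _)).
by apply: eq_card => p; rewrite !inE iswalk_ind.
Qed.

End Induced.

Section Main.
Variable T : finType.
Variable e : rel T.
Hypothesis e_sym : symmetric e.
Hypothesis e_conn : connected_graph e.
Hypothesis n_ge3 : (3 <= #|T|)%N.

Definition nb (x : T) := odflt x [pick w | e x w].

Lemma leafP x : x \in V1 e -> forall w, e x w = (w == nb x).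
Proof.
rewrite inE => /cards1P [y hy].
have ey : forall w, e x w = (w == y).
  by move=> w; move/setP: hy => /(_ w); rewrite !inE.
suff -> : nb x = y by [].
rewrite /nb; case: pickP => [w hw | none] /=; first by apply/eqP; rewrite -ey.
by have := none y; rewrite ey eqxx.
Qed.

Lemma closed_last (S : {set T}) a p : (forall x y, x \in S -> e x y -> y \in S) ->
  path e a p -> a \in S -> last a p \in S.
Proof.
move=> cl; elim: p a => [|b p IH] a //= /andP[eab pp] aS.
by apply: IH => //; apply: cl eab.
Qed.

Lemma nb_ge2 x : x \in V1 e -> nb x \in Vge2 e.
Proof.
move=> xL; rewrite /Vge2 in_setC; apply/negP => yL.
set y := nb x in yL.
have hx := leafP xL; have hy := leafP yL.
have nby : nb y = x by apply/eqP; rewrite eq_sym -hy e_sym hx.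
set S := [set x; y].
have cl : forall a b, a \in S -> e a b -> b \in S.
  move=> a b; rewrite !inE => /orP[] /eqP -> .
    by rewrite hx => ->; rewrite orbT.
  by rewrite hy nby => ->.
have allS : forall z, z \in S.
  move=> z; case/connectP: (e_conn x z) => p pp ->.
  by apply: closed_last cl pp _; rewrite !inE eqxx.
have : (#|T| <= #|S|)%N.
  rewrite -cardsT; apply: subset_leq_card; apply/subsetP => z _; exact: allS.
rewrite cards2; lia.
Qed.

Lemma notV2 x : x \notin Vge2 e -> x \in V1 e.
Proof. by rewrite /Vge2 in_setC negbK. Qed.

Lemma hleaf x : x \notin Vge2 e -> exists x', forall w, e x w = (w == x').
Proof. move/notV2 => xL; exists (nb x); exact: leafP. Qed.

Variable u : T.
Hypothesis u_ge2 : u \in Vge2 e.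
Local Open Scope ring_scope.

Definition r (s t : T) : rat := (sigma_via e s t u)%:R / (sigma e s t)%:R.

Lemma V1_neq_u x : x \in V1 e -> (u != x) * (x != u).
Proof.
move=> xL; have : u != x by apply/eqP => ux; move: u_ge2; rewrite ux /Vge2 in_setC xL.
by move=> h; split => //; rewrite eq_sym.
Qed.

Lemma V1_neq_V2 x y : x \in V1 e -> y \in Vge2 e -> (y != x) * (x != y).
Proof.
move=> xL yV; have : y != x by apply/eqP => ux; move: yV; rewrite ux /Vge2 in_setC xL.
by move=> h; split => //; rewrite eq_sym.
Qed.

Lemma r_tl s t : t \in V1 e -> s != t -> r s t = r s (nb t).
Proof.
move=> tL st.
have ht : forall w, e w t = (w == nb t) by move=> w; rewrite e_sym leafP.
by rewrite /r (sigma_via_tail (e_conn s (nb t)) ht st (V1_neq_u tL).1)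
  (sigma_tail (e_conn s (nb t)) ht st).
Qed.

Lemma r_hd s t : s \in V1 e -> s != t -> r s t = r (nb s) t.
Proof.
move=> sL st.
have hs := leafP sL.
by rewrite /r (sigma_via_head (e_conn (nb s) t) hs st (V1_neq_u sL).1)
  (sigma_head (e_conn (nb s) t) hs st).
Qed.

Lemma r_self s : s != u -> r s s = 0.
Proof.
move=> su; have g0 : gdist e s s = 0%N.
  apply/eqP; rewrite -leqn0; apply: (@gdist_min _ _ _ _ [::]); by rewrite /wk /= eqxx.
rewrite /r (sigma_via_k u g0); apply/eqP; rewrite mulf_eq0; apply/orP; left.
rewrite pnatr_eq0 cards_eq0; apply/eqP/setP => p; rewrite !inE.
have -> : (p : seq T) = [::] by apply: size0nil; rewrite size_tuple.
by rewrite in_nil orbF eq_sym (negbTE su) andbF.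
Qed.

Lemma r_u1 t : r u t = 1.
Proof.
rewrite /r (sigma_via_k u (erefl (gdist e u t))) -/(sigma e u t).
have -> : #|[set p : (gdist e u t).-tuple T | is_walk e u t p && (u \in u :: (p : seq T))]|
   = sigma e u t.
  by apply: eq_card => p; rewrite !inE eqxx andbT.
by rewrite divff // pnatr_eq0 -lt0n sigma_gt0.
Qed.

Lemma r_1u s : r s u = 1.
Proof.
rewrite /r (sigma_via_k u (erefl (gdist e s u))).
have -> : #|[set p : (gdist e s u).-tuple T | is_walk e s u p && (u \in s :: (p : seq T))]|
   = sigma e s u.
  apply: eq_card => p; rewrite !inE.
  case w: (is_walk e s u p) => //=.
  move: w; rewrite /is_walk => /andP[_ h].
  by have := mem_last s p; rewrite (eqP h) inE.
by rewrite divff // pnatr_eq0 -lt0n sigma_gt0.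
Qed.

Lemma tr s t : s \in Vge2 e -> t \in Vge2 e ->
  (tsigma_via e s t u)%:R / (tsigma e s t)%:R = r s t.
Proof.
move=> sA tA; rewrite /tsigma_via /tsigma /r.
rewrite (sigma_ind e_sym hleaf sA tA (e_conn s t)).
by rewrite (sigma_via_ind e_sym hleaf u sA tA (e_conn s t)).
Qed.

Lemma sum_excl (F : T -> rat) x : x != u ->
  \sum_(t | (t != x) && (t != u)) F t = \sum_t F t - F x - F u.
Proof.
move=> xu.
rewrite [in RHS](bigD1 x) //= [in RHS](bigD1 u (P := fun t => t != x)); last by rewrite eq_sym.
by rewrite /=; ring.
Qed.

Lemma part (F : T -> rat) :
  \sum_(t in V1 e) F (nb t) = \sum_(b in Vge2 e) (deg1 e b)%:R * F b.
Proof.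
rewrite (partition_big nb (mem (Vge2 e))) => [|t tL]; last exact: nb_ge2.
apply: eq_bigr => b bV.
rewrite (eq_bigr (fun _ => F b)) => [|t /andP[_ /eqP ->]] //.
rewrite (eq_bigl (fun t => t \in [set t | (t \in V1 e) && (nb t == b)])); last first.
  by move=> t; rewrite inE.
rewrite sumr_const mulrC mulr_natr; congr (_ *+ _).
rewrite /deg1; apply: eq_card => w; rewrite !inE.
case wL: (deg e w == 1%N) => /=; last by rewrite andbF.
have wL' : w \in V1 e by rewrite inE.
by rewrite andbT e_sym (leafP wL') eq_sym.
Qed.

Definition row s := \sum_(t | (t != s) && (t != u)) r s t.

Lemma rowA a : a \in Vge2 e -> a != u ->
  row a = tdelta e a u + zeta e a u + (deg1 e u)%:R.
Proof.
move=> aV au.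
rewrite /row (bigID (mem (Vge2 e))) /=.
have h1 : \sum_(t | ((t != a) && (t != u)) && (t \in Vge2 e)) r a t = tdelta e a u.
  rewrite /tdelta; apply: eq_big => [t|t /andP[_ tV]]; first by rewrite andbC.
  by rewrite tr.
have h2 : \sum_(t | ((t != a) && (t != u)) && ~~ (t \in Vge2 e)) r a t
    = \sum_(t in V1 e) r a (nb t).
  apply: eq_big => [t|t /andP[_ tL]].
    rewrite /Vge2 in_setC negbK; case tL: (t \in V1 e); rewrite ?andbF ?andbT //.
    by rewrite (V1_neq_V2 tL aV).2 (V1_neq_u tL).2.
  by rewrite r_tl // ?notV2 // (V1_neq_V2 (notV2 tL) aV).1.
have h3 : zeta e a u = \sum_(b | ((b \in Vge2 e) && (b != u)) && (b != a)) (deg1 e b)%:R * r a b.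
  rewrite /zeta; apply: eq_big => [t|t /andP[tV _]].
    by case: (t \in Vge2 e); case: (t != a); case: (t != u).
  by rewrite -mulrA tr.
rewrite h1 h2 part h3.
rewrite (bigD1 u) //= (bigD1 a) /=; last by rewrite aV au.
rewrite r_1u r_self // mulr0 mulr1 add0r.
ring.
Qed.

Lemma rowL s : s \in V1 e ->
  row s = (if nb s == u then (#|T| - 2)%:R else row (nb s)).
Proof.
move=> sL; have su := (V1_neq_u sL).2.
case: eqP => [nu|nu].
  rewrite /row (eq_bigr (fun _ => 1)); last first.
    by move=> t /andP[st _]; rewrite r_hd 1?eq_sym // nu r_u1.
    rewrite (sum_excl (fun _ => 1)) // sumr_const natrB; last lia.
  by change (#|T|%:R - 1 - 1 = #|T|%:R - 2%:R :> rat); ring.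
have aV := nb_ge2 sL; set a := nb s in nu aV *.
have au : a != u by apply/eqP.
rewrite /row (eq_bigr (r a)); last first.
  by move=> t /andP[st _]; rewrite r_hd 1?eq_sym.
rewrite sum_excl // sum_excl // r_self // (r_tl sL); last by rewrite (V1_neq_V2 sL aV).1.
by rewrite r_self.
Qed.

Lemma count_V2 :
  \sum_(s in Vge2 e | s != u) (1 + (deg1 e s)%:R) = #|T|%:R - 1 - (deg1 e u)%:R :> rat.
Proof.
have hp : \sum_(t in V1 e) (1:rat) = \sum_(b in Vge2 e) (deg1 e b)%:R.
  rewrite (part (fun _ => 1)); apply: eq_bigr => b _; exact: mulr1.
have e2 : \sum_(t in Vge2 e) (1:rat) + \sum_(t in V1 e) 1 = #|T|%:R.
  by rewrite !sumr_const -natrD /Vge2 addnC cardsC.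
have e1 : \sum_(b in Vge2 e) (1 + (deg1 e b)%:R) = #|T|%:R :> rat.
  by rewrite big_split /= -hp.
move: e1; rewrite (bigD1 u) //= => e1.
rewrite -e1; ring.
Qed.

Lemma main_sec :
  ((#|T| - 1)%:R * (#|T| - 2)%:R) * bc e u =
    \sum_(s in Vge2 e | s != u)
       (1 + (deg1 e s)%:R) * (tdelta e s u + zeta e s u)
    + (deg1 e u)%:R * (2 * (#|T|)%:R - 3 - (deg1 e u)%:R).
Proof.
have c0 : ((#|T| - 1)%:R * (#|T| - 2)%:R : rat) != 0.
  rewrite mulf_neq0 // pnatr_eq0; lia.
rewrite /bc mulrA mulfV // mul1r.
transitivity (\sum_(s | s != u) row s); first by [].
rewrite (bigID (mem (Vge2 e))) /=.
set g := fun b => if b == u then (#|T| - 2)%:R else row b.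
have hL : \sum_(s | (s != u) && ~~ (s \in Vge2 e)) row s = \sum_(s in V1 e) g (nb s).
  apply: eq_big => [t|t /andP[_ tL]].
    rewrite /Vge2 in_setC negbK; case tL: (t \in V1 e); rewrite ?andbF ?andbT //.
    by rewrite (V1_neq_u tL).2.
  by rewrite rowL // notV2.
rewrite hL part [X in _ + X = _](bigD1 u) //= /g eqxx.
have hg : \sum_(b in Vge2 e | b != u) (deg1 e b)%:R * g b
   = \sum_(b in Vge2 e | b != u) (deg1 e b)%:R * row b.
  by apply: eq_bigr => b /andP[_ bu]; rewrite /g (negbTE bu).
have hr : \sum_(s | (s != u) && (s \in Vge2 e)) row s = \sum_(s in Vge2 e | s != u) row s.
  by apply: eq_bigl => s; rewrite andbC.
rewrite hg hr.
have hS : \sum_(s in Vge2 e | s != u) row s + \sum_(s in Vge2 e | s != u) (deg1 e s)%:R * row s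
  = \sum_(s in Vge2 e | s != u) (1 + (deg1 e s)%:R) * (tdelta e s u + zeta e s u)
    + (deg1 e u)%:R * \sum_(s in Vge2 e | s != u) (1 + (deg1 e s)%:R).
  rewrite -big_split mulr_sumr -big_split; apply: eq_bigr => s /andP[sV su].
  rewrite rowA //.
  change (tdelta e s u + zeta e s u + (deg1 e u)%:R + (deg1 e s)%:R * (tdelta e s u + zeta e s u + (deg1 e u)%:R) = (1 + (deg1 e s)%:R) * (tdelta e s u + zeta e s u) + (deg1 e u)%:R * (1 + (deg1 e s)%:R)).
  ring.
have n2 : (#|T| - 2)%:R = #|T|%:R - 2 :> rat by rewrite natrB //; lia.
rewrite addrCA hS count_V2 n2; ring.
Qed.

End Main.


Unset Implicit Arguments.
Local Open Scope ring_scope.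

Theorem mainTheorem6 (T : finType) (e : rel T)
  (e_sym : symmetric e) (e_irr : irreflexive e)
  (e_conn : connected_graph e) (n_ge3 : (3 <= #|T|)%N)
  (u : T) (u_ge2 : u \in Vge2 e) :
  ((#|T| - 1)%:R * (#|T| - 2)%:R) * bc e u =
    \sum_(s in Vge2 e | s != u)
       (1 + (deg1 e s)%:R) * (tdelta e s u + zeta e s u)
    + (deg1 e u)%:R * (2 * (#|T|)%:R - 3 - (deg1 e u)%:R).
Proof.
exact: (main_sec e_sym e_conn n_ge3 u_ge2).
Qed.
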